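(* Let $\Sigma$ be a first-order language and let $\mathcal{T}_{\Sigma,\infty}$ be the family of all complete theories in $\Sigma$ having infinite models. If $\Sigma$ is finite and contains no predicate symbols of arity $m\ge 2$ and no function symbols of arity $n\ge 1$, then ${\rm RS}(\mathcal{T}_{\Sigma,\infty})$ is finite (a natural number); otherwise ${\rm RS}(\mathcal{T}_{\Sigma,\infty})=\infty$.
   Context: Theories are complete consistent first-order theories; structures have nonempty universes. Function symbols (constants being $0$-ary function symbols) are treated via their graphs: each $n$-ary function symbol $f$ is replaced by an $(n+1)$-ary predicate $R_f=\{(\bar a,b)\mid f(\bar a)=b\}$, and sentences are those of the resulting relational language. For a family $\mathcal{T}$ of theories and a sentence $\varphi$ of its language, $\mathcal{T}_\varphi=\{T\in\mathcal{T}\mid\varphi\in T\}$. The rank ${\rm RS}$ of a family is defined as follows: ${\rm RS}(\emptyset)=-1$; ${\rm RS}(\mathcal{T})=0$ for finite nonempty $\mathcal{T}$; ${\rm RS}(\mathcal{T})\ge 1$ for infinite $\mathcal{T}$; for $\alpha=\beta+1$, ${\rm RS}(\mathcal{T})\ge\alpha$ iff there are pairwise inconsistent sentences $\varphi_k$, $k\in\omega$, of the language of $\mathcal{T}$ with ${\rm RS}(\mathcal{T}_{\varphi_k})\ge\beta$ for all $k$; for limit $\alpha$, ${\rm RS}(\mathcal{T})\ge\alpha$ iff ${\rm RS}(\mathcal{T})\ge\beta$ for all $\beta<\alpha$; ${\rm RS}(\mathcal{T})=\alpha$ iff ${\rm RS}(\mathcal{T})\ge\alpha$ and not ${\rm RS}(\mathcal{T})\ge\alpha+1$;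 ${\rm RS}(\mathcal{T})=\infty$ if ${\rm RS}(\mathcal{T})\ge\alpha$ for every ordinal $\alpha$. *)

(* Defs.v *)
(* First-order logic over a signature Sigma,
   with function symbols replaced by their graphs, as in the paper. *)
From mathcomp Require Import all_boot.
From Stdlib Require List.

Set Implicit Arguments.
Unset Strict Implicit.
Unset Printing Implicit Defensive.

Record signature := Signature {
  psym : Type;
  parity : psym -> nat;
  fsym : Type;
  farity : fsym -> nat }.

(* Relational language: predicate symbols and graphs R_f of function symbols *)
Definition rsym (S : signature) : Type := (psym S + fsym S)%type.
Definition rarity (S : signature) (r : rsym S) : nat :=
  match r with inl p => parity p | inr f => (farity f).+1 end.

Definition finite_type (X : Type) : Prop :=
  exists l : seq X, forall x : X, List.In x l.

Definition finite_signature (S : signature) : Prop :=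
  finite_type (psym S) /\ finite_type (fsym S).

(* ---------- Formulas of the relational language (with equality) ----------
   Variables are de Bruijn indices; FEx binds index 0. *)
Inductive formula (S : signature) : Type :=
| FRel (r : rsym S) (args : 'I_(rarity r) -> nat)
| FEq (i j : nat)
| FNot (f : formula S)
| FAnd (f g : formula S)
| FEx (f : formula S).

Fixpoint closed_below (S : signature) (k : nat) (f : formula S) : bool :=
  match f with
  | FRel r args => [forall i, args i < k]
  | FEq i j => (i < k) && (j < k)
  | FNot g => closed_below k g
  | FAnd g h => closed_below k g && closed_below k h
  | FEx g => closed_below k.+1 g
  end.

Definition sentence (S : signature) : Type :=
  {f : formula S | closed_below 0 f}.

Definition sneg (S : signature) (phi : sentence S) : sentence S :=
  exist _ (FNot (proj1_sig phi)) (proj2_sig phi).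

Record structure (S : signature) := Structure {
  dom : Type;
  dom_inhab : dom;
  pint : forall p : psym S, ('I_(parity p) -> dom) -> Prop;
  fint : forall f : fsym S, ('I_(farity f) -> dom) -> dom }.

Definition rint (S : signature) (M : structure S) (r : rsym S) :
  ('I_(rarity r) -> dom M) -> Prop :=
  match r as r0 return ('I_(rarity r0) -> dom M) -> Prop with
  | inl p => fun a => pint a
  | inr f => fun a =>
      fint (fun i : 'I_(farity f) => a (widen_ord (leqnSn _) i)) = a ord_max
  end.

Definition scons (X : Type) (x : X) (e : nat -> X) (n : nat) : X :=
  match n with 0 => x | n'.+1 => e n' end.

Fixpoint sat (S : signature) (M : structure S) (e : nat -> dom M)
  (f : formula S) : Prop :=
  match f with
  | FRel r args => rint (fun i => e (args i))
  | FEq i j => e i = e j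
  | FNot g => ~ sat e g
  | FAnd g h => sat e g /\ sat e h
  | FEx g => exists m : dom M, sat (scons m e) g
  end.

Definition satS (S : signature) (M : structure S) (phi : sentence S) : Prop :=
  sat (fun _ => dom_inhab M) (proj1_sig phi).

Definition theory (S : signature) : Type := sentence S -> Prop.

Definition models (S : signature) (M : structure S) (T : theory S) : Prop :=
  forall phi, T phi -> satS M phi.

Definition complete_theory (S : signature) (T : theory S) : Prop :=
  (exists M : structure S, models M T) /\
  (forall phi, (forall M : structure S, models M T -> satS M phi) -> T phi) /\
  (forall phi, T phi \/ T (sneg phi)).

Definition family (S : signature) : Type := theory S -> Prop.

Definition T_inf (S : signature) : family S := fun T =>
  complete_theory T /\
  exists M : structure S, ~ finite_type (dom M) /\ models M T.

Definition restrict (S : signature) (F : family S) (phi : sentence S) : family S :=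
  fun T => F T /\ T phi.

Definition family_nonempty (S : signature) (F : family S) : Prop :=
  exists T, F T.

Definition family_finite (S : signature) (F : family S) : Prop :=
  exists l : seq (theory S), forall T, F T ->
    exists T', List.In T' l /\ forall phi, T phi <-> T' phi.

Definition family_infinite (S : signature) (F : family S) : Prop :=
  ~ family_finite F.

Definition inconsistent2 (S : signature) (phi psi : sentence S) : Prop :=
  forall M : structure S, ~ (satS M phi /\ satS M psi).

(* ---------- Ordinals as positions in well-orders ---------- *)
Definition well_order (W : Type) (lt : W -> W -> Prop) : Prop :=
  well_founded lt /\
  (forall a b c, lt a b -> lt b c -> lt a c) /\
  (forall a b, lt a b \/ a = b \/ lt b a).

Definition is_min (W : Type) (lt : W -> W -> Prop) (w : W) : Prop :=
  forall v, ~ lt v w.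

Definition is_succ (W : Type) (lt : W -> W -> Prop) (v w : W) : Prop :=
  lt v w /\ forall u, lt v u -> ~ lt u w.

Definition is_limit (W : Type) (lt : W -> W -> Prop) (w : W) : Prop :=
  ~ is_min lt w /\ ~ exists v, is_succ lt v w.

(* RSge lt F w  <->  RS(F) >= (the ordinal of position w in the well-order lt) *)
Inductive RSge (S : signature) (W : Type) (lt : W -> W -> Prop) :
  family S -> W -> Prop :=
| RSge_zero F w : is_min lt w -> family_nonempty F -> RSge lt F w
| RSge_one F w v : is_min lt v -> is_succ lt v w -> family_infinite F ->
    RSge lt F w
| RSge_succ F w v : ~ is_min lt v -> is_succ lt v w ->
    (exists phi : nat -> sentence S,
        (forall i j, i <> j -> inconsistent2 (phi i) (phi j)) /\
        (forall k, RSge lt (restrict F (phi k)) v)) ->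
    RSge lt F w
| RSge_lim F w : is_limit lt w ->
    (forall v, lt v w -> RSge lt F v) -> RSge lt F w.

Definition RS_eq_nat (S : signature) (F : family S) (n : nat) : Prop :=
  RSge Peano.lt F n /\ ~ RSge Peano.lt F n.+1.

Definition RS_infty (S : signature) (F : family S) : Prop :=
  forall (W : Type) (lt : W -> W -> Prop), well_order lt ->
    forall w : W, RSge lt F w.

Definition small_signature (S : signature) : Prop :=
  finite_signature S /\ (forall p : psym S, parity p < 2) /\
  (forall f : fsym S, farity f = 0).

Arguments T_inf S : clear implicits.

(* Main.v *)
From mathcomp Require Import all_boot.
From Stdlib Require Import Classical ClassicalDescription ClassicalEpsilon FunctionalExtensionality.
From Stdlib Require Cantor List.
From mathcomp Require Import zify.
Require Import Defs.

Set Implicit Arguments.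
Unset Strict Implicit.
Unset Printing Implicit Defensive.


Definition Th (S : signature) (M : structure S) : theory S := fun phi => satS M phi.

Lemma Th_complete S (M : structure S) : complete_theory (Th M).
Proof.
split; first by exists M.
split; first by move=> phi H; apply: H.
move=> phi; rewrite /Th /satS /sneg /=; exact: classic.
Qed.

Lemma Th_Tinf S (M : structure S) : ~ finite_type (dom M) -> T_inf S (Th M).
Proof. move=> H; split; first exact: Th_complete. exists M; split=> //. Qed.

Lemma pigeon (A : Type) (l : list A) : forall (R : nat -> A -> Prop),
  (forall k, exists a, List.In a l /\ R k a) ->
  (forall k j a, R k a -> R j a -> k = j) -> False.
Proof.
elim: l => [|a l IH] R Hex Hu.
  by case: (Hex 0) => a [].
case: (classic (exists k0, R k0 a)) => [[k0 Hk0]|Hno].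
- pose sh k := if k < k0 then k else k.+1.
  apply: (IH (fun k a' => R (sh k) a')).
    move=> k; case: (Hex (sh k)) => a' [[<-|Hin] Hr]; last by exists a'.
    have := Hu _ _ _ Hr Hk0; rewrite /sh; case: ltnP => h E.
      by rewrite E ltnn in h.
    by rewrite -E in h; rewrite ltnn in h.
  move=> k j a' H1 H2; have := Hu _ _ _ H1 H2; rewrite /sh.
  case: (ltnP k k0); case: (ltnP j k0) => h1 h2 E; lia.
- apply: (IH R) => // k; case: (Hex k) => a' [[<-|Hin] Hr]; last by exists a'.
  by case: Hno; exists k.
Qed.

Definition sand S (phi psi : sentence S) : sentence S :=
  exist _ (FAnd (proj1_sig phi) (proj1_sig psi))
    (introT andP (conj (proj2_sig phi) (proj2_sig psi))).

Definition strue S : sentence S := exist _ (FEx (FEq S 0 0)) is_true_true.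

Lemma sat_sand S (M : structure S) phi psi :
  satS M (sand phi psi) <-> satS M phi /\ satS M psi.
Proof. by []. Qed.

Lemma sat_sneg S (M : structure S) phi : satS M (sneg phi) <-> ~ satS M phi.
Proof. by []. Qed.

Definition cpair (i n : nat) : nat := Cantor.to_nat (i, n).

Lemma cpair_inj i n i' n' : cpair i n = cpair i' n' -> i = i' /\ n = n'.
Proof.
move=> E; have := Cantor.cancel_of_to (i, n); rewrite /cpair in E.
by rewrite E Cantor.cancel_of_to => -[-> ->].
Qed.

Section Bits.
Variable S : signature.
Variable beta : nat -> sentence S.
Variable M : (nat -> bool) -> structure S.
Hypothesis Minf : forall B, ~ finite_type (dom (M B)).
Hypothesis Mbeta : forall B j, satS (M B) (beta j) <-> B j.

Fixpoint guard (i n : nat) : sentence S :=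
  match n with
  | 0 => strue S
  | n'.+1 => sand (guard i n') (sneg (beta (cpair i n')))
  end.

Lemma guard_sat (N : structure S) i n :
  satS N (guard i n) <-> forall m, m < n -> ~ satS N (beta (cpair i m)).
Proof.
elim: n => [|n IH] /=.
  split=> // _; exists (dom_inhab N) => //.
rewrite sat_sand IH sat_sneg; split.
  move=> [H1 H2] m; rewrite ltnS leq_eqVlt => /orP[/eqP->//|]; exact: H1.
move=> H; split; last exact: H.
by move=> m hm; apply: H; apply: ltnW.
Qed.

Definition psi i n := sand (beta (cpair i n)) (guard i n).

Lemma psi_incons i n n' : n <> n' -> inconsistent2 (psi i n) (psi i n').
Proof.
wlog: n n' / n < n'.
  move=> W; case: (ltngtP n n') => h hne.
  - exact: W.
  - move=> N [H1 H2]; apply: (W n' n h _ N) => //; by move=> E; apply: hne.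
  - by case: hne.
move=> h _ N [H1 H2]; move: H1 H2; rewrite !sat_sand.
move=> [H1 _] [_ H2]; by move: H2; rewrite guard_sat => /(_ n h).
Qed.

Definition upd (B0 : nat -> bool) N n : nat -> bool :=
  fun x => if (Cantor.of_nat x).1 == N then (Cantor.of_nat x).2 == n else B0 x.

Lemma upd_pair B0 N n i m :
  upd B0 N n (cpair i m) = if i == N then m == n else B0 (cpair i m).
Proof. by rewrite /upd /cpair Cantor.cancel_of_to. Qed.

Definition Pf (F : family S) := exists N B0, forall B,
  (forall i n, i < N -> B (cpair i n) = B0 (cpair i n)) -> F (Th (M B)).

Lemma Pf_nonempty F : Pf F -> family_nonempty F.
Proof. by move=> [N [B0 H]]; exists (Th (M B0)); apply: H. Qed.

Lemma Pf_infinite F : Pf F -> family_infinite F.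
Proof.
move=> [N [B0 H]] [l Hl].
apply: (@pigeon _ l (fun k T' => forall phi, Th (M (upd B0 N k)) phi <-> T' phi)).
  move=> k; apply: Hl; apply: H => i n hi.
  by rewrite upd_pair (ltn_eqF hi).
move=> k j a H1 H2.
have: Th (M (upd B0 N j)) (beta (cpair N k)).
  by apply/H2/H1; rewrite /Th Mbeta upd_pair eqxx.
by rewrite /Th Mbeta upd_pair eqxx => /eqP.
Qed.

Lemma Pf_restrict F N B0 :
  (forall B, (forall i n, i < N -> B (cpair i n) = B0 (cpair i n)) -> F (Th (M B))) ->
  forall n, Pf (restrict F (psi N n)).
Proof.
move=> H n; exists N.+1, (upd B0 N n) => B HB; split.
  apply: H => i m hi; rewrite HB ?upd_pair ?(ltn_eqF hi) //; exact: ltnW.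
rewrite /Th sat_sand Mbeta guard_sat; split.
  by rewrite HB // upd_pair !eqxx.
move=> m hm; rewrite Mbeta HB // upd_pair eqxx.
by rewrite (ltn_eqF hm).
Qed.

Lemma Pf_RS F : Pf F -> RS_infty F.
Proof.
move=> HF W lt [wf [tr tot]] w.
elim/(well_founded_ind wf): w F HF => w IH F HF.
case: (classic (is_min lt w)) => Hmin.
  by apply: RSge_zero => //; apply: Pf_nonempty.
case: (classic (exists v, is_succ lt v w)) => [[v Hv]|Hns].
  case: (classic (is_min lt v)) => Hvm.
    by apply: (RSge_one (v := v)) => //; apply: Pf_infinite.
  apply: (RSge_succ (v := v)) => //.
  case: HF => N [B0 H].
  exists (psi N); split.
    by move=> i j; apply: psi_incons.
  move=> k; apply: IH; first by case: Hv.
  exact: (@Pf_restrict F N B0 H k).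
apply: RSge_lim; first by split.
by move=> v hv; apply: IH.
Qed.

Lemma bits_RS : RS_infty (T_inf S).
Proof.
apply: Pf_RS; exists 0, (fun _ => false) => B _.
exact: Th_Tinf.
Qed.

End Bits.


Lemma nat_bound (l : list nat) : exists x, forall y, List.In y l -> y < x.
Proof.
elim: l => [|a l [x Hx]]; first by exists 0.
exists (maxn a.+1 x) => y [<-|/Hx h]; lia.
Qed.

Lemma nat_inf : ~ finite_type nat.
Proof. by move=> [l Hl]; case: (nat_bound l) => x Hx; have := Hx _ (Hl x); rewrite ltnn. Qed.

Lemma nat2_inf : ~ finite_type (nat * nat).
Proof.
move=> [l Hl]; apply: nat_inf; exists (List.map fst l) => x.
by apply: (List.in_map fst l (x, 0)).
Qed.

Section InfSeq.
Variable X : Type.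
Hypothesis Hinf : ~ finite_type X.

Lemma notin_ex (l : list X) : exists x, ~ List.In x l.
Proof. apply: NNPP => H; apply: Hinf; exists l => x; apply: NNPP => Hx; apply: H; by exists x. Qed.

Definition pick (l : list X) : X := proj1_sig (constructive_indefinite_description _ (notin_ex l)).
Lemma pick_notin l : ~ List.In (pick l) l.
Proof. exact: proj2_sig (constructive_indefinite_description _ (notin_ex l)). Qed.

Fixpoint Lseq (n : nat) : list X := match n with 0 => nil | n'.+1 => pick (Lseq n') :: Lseq n' end.
Definition gseq n := pick (Lseq n).

Lemma gseq_in m n : m < n -> List.In (gseq m) (Lseq n).
Proof.
elim: n => // n IH; rewrite ltnS leq_eqVlt => /orP[/eqP->|h]; first by left.
by right; apply: IH.
Qed.

Lemma gseq_inj : injective gseq.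
Proof.
move=> m n E; case: (ltngtP m n) => // h.
- by have := gseq_in h; rewrite E => /pick_notin.
- by have := gseq_in h; rewrite -E => /pick_notin.
Qed.
End InfSeq.

Lemma forall_true (n : nat) (P : 'I_n -> bool) : (forall i, P i) -> [forall i, P i].
Proof. by move=> H; apply/forallP. Qed.

Section CaseA.
Variable S : signature.
Variable g : nat -> psym S.
Hypothesis ginj : injective g.

Definition MA (B : nat -> bool) : structure S :=
  @Structure S nat 0 (fun q _ => exists j, q = g j /\ B j) (fun _ _ => 0).

Definition fA j : formula S := FEx (@FRel S (inl (g j)) (fun _ => 0)).
Lemma fA_closed j : closed_below 0 (fA j).
Proof. by apply: forall_true. Qed.
Definition betaA j : sentence S := exist _ (fA j) (fA_closed j).

Lemma betaA_sat B j : satS (MA B) (betaA j) <-> B j.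
Proof.
rewrite /satS /=; split.
  by move=> [_ [j' [/ginj -> H]]].
by move=> H; exists 0, j.
Qed.
End CaseA.

Section CaseB.
Variable S : signature.
Variable g : nat -> fsym S.
Hypothesis ginj : injective g.

Definition fintB (B : nat -> bool) (h : fsym S) (_ : 'I_(farity h) -> nat) : nat :=
  if excluded_middle_informative (exists j, h = g j.+1 /\ B j = false) then 1 else 0.

Definition MB (B : nat -> bool) : structure S :=
  @Structure S nat 0 (fun _ _ => False) (fintB B).

Definition fB j : formula S :=
  FEx (FAnd (@FRel S (inr (g 0)) (fun _ => 0)) (@FRel S (inr (g j.+1)) (fun _ => 0))).
Lemma fB_closed j : closed_below 0 (fB j).
Proof. by apply/andP; split; apply: forall_true. Qed.
Definition betaB j : sentence S := exist _ (fB j) (fB_closed j).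

Lemma betaB_sat B j : satS (MB B) (betaB j) <-> B j.
Proof.
rewrite /satS /= /fintB.
case: (excluded_middle_informative (exists j0 : nat, g 0 = g j0.+1 /\ B j0 = false)) => [H0|_] /=.
  by case: H0 => j' [E _]; have := ginj E.
case: (excluded_middle_informative (exists j0 : nat, g j.+1 = g j0.+1 /\ B j0 = false)) => [H|H] /=.
  case: H => j' [E Hf].
  have [Ej] := ginj E; subst j'; rewrite Hf; by split=> // -[m [<-]].
split=> [_|Hb]; last by exists 0.
by case: (boolP (B j)) => // /negbTE Hf; case: H; exists j.
Qed.
End CaseB.

Lemma closed_mono S (f : formula S) : forall k k', k <= k' -> closed_below k f -> closed_below k' f.
Proof.
elim: f => [r args|i j|g IH|g IHg h IHh|g IH] k k' hk /=.
- move/forallP=> H; apply/forallP=> i; exact: leq_trans (H i) hk.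
- move/andP=> [h1 h2]; apply/andP; split; exact: leq_trans hk.
- exact: IH.
- move/andP=> [h1 h2]; apply/andP; split; [exact: IHg h1|exact: IHh h2].
- by apply: IH.
Qed.

Definition Erel (B : nat -> bool) (x y : nat * nat) : Prop :=
  x.1 = y.1 /\ B x.1 /\ y.2 = x.2.+1 /\ x.2 <= x.1.

Section Chain.
Variable S : signature.
Variable E : nat -> nat -> formula S.
Hypothesis Eclosed : forall a b k, a < k -> b < k -> closed_below k (E a b).
Variable M : (nat -> bool) -> structure S.
Hypothesis Mdom : forall B, dom (M B) = (nat * nat)%type.
Variable B : nat -> bool.
Let D := dom (M B).
Let cast : D -> nat * nat := fun x => eq_rect _ id x _ (Mdom B).
Hypothesis Esat : forall (e : nat -> D) a b, sat e (E a b) <-> Erel B (cast (e a)) (cast (e b)).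

Fixpoint Wf (n : nat) : formula S :=
  match n with
  | 0 => FEx (FAnd (E 1 0) (FNot (FEx (E 1 0))))
  | n'.+1 => FEx (FAnd (E 1 0) (Wf n'))
  end.

Lemma Wf_closed n : closed_below 1 (Wf n).
Proof.
elim: n => [|n IH] /=; first by rewrite !Eclosed.
by rewrite Eclosed // (closed_mono (k := 1)).
Qed.

Definition bitf j : formula S := FEx (FAnd (FNot (FEx (E 0 1))) (Wf j)).
Lemma bitf_closed j : closed_below 0 (bitf j).
Proof. by rewrite /= Eclosed // Wf_closed. Qed.

Fixpoint Pch (n : nat) (x : D) : Prop :=
  match n with
  | 0 => exists y, Erel B (cast x) (cast y) /\ ~ exists z, Erel B (cast y) (cast z)
  | n'.+1 => exists y, Erel B (cast x) (cast y) /\ Pch n' y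
  end.

Lemma Wf_sat n (e : nat -> D) : sat e (Wf n) <-> Pch n (e 0).
Proof.
elim: n e => [|n IH] e /=.
  split=> -[y [H1 H2]]; exists y; move: H1; rewrite Esat /= => H1; split=> //.
    by move=> [z Hz]; apply: H2; exists z; rewrite Esat.
  by move=> [z]; rewrite Esat => Hz; apply: H2; exists z.
split=> -[y [H1 H2]]; exists y; move: H1; rewrite Esat /= => H1; split=> //.
  by move: H2; rewrite IH.
by rewrite IH.
Qed.

Lemma cast_surj (p : nat * nat) : exists x, cast x = p.
Proof.
rewrite /cast; move: (Mdom B); rewrite /D; move: (dom (M B)) => T ET; subst T; by exists p.
Qed.

Lemma Pch_iff n x : Pch n x <-> B (cast x).1 /\ (cast x).2 + n = (cast x).1.
Proof.
elim: n x => [|n IH] x /=.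
  split.
    move=> [y [[h1 [h2 [h3 h4]]] H]]; split=> //.
    apply: NNPP => Hn; apply: H.
    case: (cast_surj ((cast y).1, (cast y).2.+1)) => z Hz.
    exists z; rewrite /Erel Hz /= -h1; repeat split=> //; lia.
  move=> [Hb He].
  case: (cast_surj ((cast x).1, (cast x).2.+1)) => y Hy.
  exists y; rewrite /Erel Hy /=; split; first (repeat split=> //; lia).
  by move=> [z [/= h1 [_ [_ h4]]]]; lia.
split.
  move=> [y [[h1 [h2 [h3 h4]]] /IH [H1 H2]]]; split=> //; lia.
move=> [Hb He].
case: (cast_surj ((cast x).1, (cast x).2.+1)) => y Hy.
exists y; rewrite /Erel Hy /=; split; first (repeat split=> //; lia).
apply/IH; rewrite Hy /=; split=> //; lia.
Qed.

Lemma bitf_sat j : sat (fun _ => dom_inhab (M B)) (bitf j) <-> B j.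
Proof.
rewrite /=; split.
  move=> [x [Hnp]]; rewrite Wf_sat /= Pch_iff => -[Hb He].
  case: (posnP (cast x).2) => h.
    by rewrite h add0n in He; rewrite He.
  exfalso; apply: Hnp.
  case: (cast_surj ((cast x).1, (cast x).2.-1)) => y Hy.
  exists y; rewrite Esat /= /Erel Hy /=; repeat split=> //; lia.
move=> Hb; case: (cast_surj (j, 0)) => x Hx; exists x; split.
  by move=> [y]; rewrite Esat /= /Erel Hx /= => -[_ [_ [h _]]].
by rewrite Wf_sat /= Pch_iff Hx.
Qed.
End Chain.

Section CaseC.
Variable S : signature.
Variable p : psym S.
Hypothesis hp : 1 < parity p.

Definition MC (B : nat -> bool) : structure S :=
  @Structure S (nat * nat) (0, 0)
    (fun q args => exists (h0 : 0 < parity q) (h1 : 1 < parity q),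
        Erel B (args (Ordinal h0)) (args (Ordinal h1)))
    (fun _ _ => (0, 0)).

Definition EC (a b : nat) : formula S :=
  @FRel S (inl p) (fun i : 'I_(parity p) => if val i == 0 then a else b).

Lemma EC_closed a b k : a < k -> b < k -> closed_below k (EC a b).
Proof. by move=> ha hb; apply: forall_true => i /=; case: ifP. Qed.

Lemma EC_sat B (e : nat -> nat * nat) a b : @sat S (MC B) e (EC a b) <-> Erel B (e a) (e b).
Proof.
rewrite /=; split; first by move=> [h0 [h1]].
by move=> H; exists (ltnW hp), hp.
Qed.

Lemma caseC : RS_infty (T_inf S).
Proof.
refine (@bits_RS S (fun j => exist (fun f => is_true (closed_below 0 f)) _ (@bitf_closed S EC EC_closed j)) MC _ _).
  by move=> B; apply: nat2_inf.
move=> B j; rewrite /satS /=.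
exact: (@bitf_sat S EC MC (fun _ => erefl) B (fun e a b => EC_sat B e a b) j).
Qed.
End CaseC.

Definition gstep (B : nat -> bool) (x : nat * nat) : nat * nat :=
  if B x.1 && (x.2 <= x.1) then (x.1, x.2.+1) else x.

Definition app1 (B : nat -> bool) (n : nat) : ('I_n -> nat * nat) -> nat * nat :=
  match n with 0 => fun _ => (0, 0) | n'.+1 => fun a => gstep B (a ord0) end.

Lemma app1_eq B n (h : 'I_n -> nat * nat) (H : 0 < n) : app1 B h = gstep B (h (Ordinal H)).
Proof. by case: n h H => // n h H /=; congr (gstep B (h _)); apply: val_inj. Qed.

Section CaseD.
Variable S : signature.
Variable f : fsym S.
Hypothesis hf : 0 < farity f.

Definition MD (B : nat -> bool) : structure S :=
  @Structure S (nat * nat) (0, 0) (fun _ _ => False) (fun h => @app1 B (farity h)).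

Definition ED (a b : nat) : formula S :=
  FAnd (@FRel S (inr f) (fun i : 'I_(farity f).+1 => if val i == farity f then b else a))
       (FNot (FEq S a b)).

Lemma ED_closed a b k : a < k -> b < k -> closed_below k (ED a b).
Proof. by move=> ha hb; rewrite /= ha hb; apply/andP; split=> //; apply: forall_true => i /=; case: ifP. Qed.

Lemma ED_sat B (e : nat -> nat * nat) a b : @sat S (MD B) e (ED a b) <-> Erel B (e a) (e b).
Proof.
rewrite /= eqxx app1_eq /= (ltn_eqF hf).
rewrite /gstep /Erel; case: (e a) => x k /=.
case: (e b) => y l /=.
case: ifP => [/andP[H1 H2]|Hn]; split.
- by move=> [[<- <-] _].
- by move=> [-> [_ [-> _]]]; split=> // -[E]; lia.
- by move=> [[<- <-]].
- by move=> [<- [H1 [-> H2]]]; rewrite H1 H2 in Hn.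
Qed.

Lemma caseD : RS_infty (T_inf S).
Proof.
refine (@bits_RS S (fun j => exist (fun f => is_true (closed_below 0 f)) _ (@bitf_closed S ED ED_closed j)) MD _ _).
  by move=> B; apply: nat2_inf.
move=> B j; rewrite /satS /=.
exact: (@bitf_sat S ED MD (fun _ => erefl) B (fun e a b => ED_sat B e a b) j).
Qed.
End CaseD.

Lemma part2 S : ~ small_signature S -> RS_infty (T_inf S).
Proof.
move=> Hns.
case: (classic (finite_type (psym S))) => Hp; last first.
  refine (@bits_RS S (betaA (gseq Hp)) (@MA S (gseq Hp)) _ _); first by move=> B; apply: nat_inf.
  by move=> B j; apply: betaA_sat; apply: gseq_inj.
case: (classic (finite_type (fsym S))) => Hf; last first.
  refine (@bits_RS S (betaB (gseq Hf)) (@MB S (gseq Hf)) _ _); first by move=> B; apply: nat_inf.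
  by move=> B j; apply: betaB_sat; apply: gseq_inj.
destruct (classic (exists p : psym S, 1 < parity p)) as [[p hp]|Hp2].
  exact: (@caseC S p hp).
destruct (classic (exists f : fsym S, 0 < farity f)) as [[f hf]|Hf2].
  exact: (@caseD S f hf).
exfalso; apply: Hns; split; first by split.
split.
  move=> p; case: ltnP => // h; case: Hp2; by exists p.
move=> f; case: (posnP (farity f)) => // h; case: Hf2; by exists f.
Qed.


Definition pb (P : Prop) : bool := if excluded_middle_informative P then true else false.
Lemma pbP (P : Prop) : pb P <-> P.
Proof. by rewrite /pb; case: excluded_middle_informative. Qed.
Lemma pb_eq (P Q : Prop) : pb P = pb Q -> (P <-> Q).
Proof. by rewrite /pb; do 2 case: excluded_middle_informative. Qed.

Lemma pb_ext (P Q : Prop) : (P <-> Q) -> pb P = pb Q.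
Proof.
move=> H; rewrite /pb.
case: (excluded_middle_informative P) => hp; case: (excluded_middle_informative Q) => hq //.
- by exfalso; apply: hq; apply/H.
- by exfalso; apply: hp; apply/H.
Qed.

Lemma lenE (X : Type) (l : list X) : List.length l = size l.
Proof. by elim: l => //= a l ->. Qed.

Lemma inE_list (T : eqType) (x : T) (s : seq T) : List.In x s <-> x \in s.
Proof.
elim: s => [|a s IH] //=; rewrite in_cons; split.
  by move=> [->|/IH ->]; rewrite ?eqxx ?orbT.
by move=> /orP[/eqP->|/IH]; [left|right].
Qed.

Lemma in_tnth (X : Type) (l : list X) (x : X) : List.In x l -> exists i, tnth (in_tuple l) i = x.
Proof.
elim: l => [|a l IH] //= [<-|/IH [i Hi]].
  by exists ord0; rewrite (tnth_nth a) /=.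
have hi : i.+1 < size (a :: l) by rewrite /= ltnS ltn_ord.
exists (Ordinal hi); rewrite (tnth_nth a) /=.
by rewrite -Hi (tnth_nth a).
Qed.

Lemma rep_list (X Y : Type) (v : X -> Y) (P : X -> Prop) (l : list X) :
  exists l0, (forall a, List.In a l0 -> List.In a l /\ P a) /\ List.NoDup (List.map v l0) /\
    (forall a, List.In a l -> P a -> exists b, List.In b l0 /\ v a = v b) /\
    List.length l0 <= List.length l.
Proof.
elim: l => [|a l [l0 [H1 [H2 [H3 H4]]]]].
  exists nil; split; first by []. split; first by constructor. by split.
case: (classic (P a /\ ~ exists b, List.In b l0 /\ v a = v b)) => [[Pa Hn]|Hc].
- exists (a :: l0); split; last split; last split.
  + move=> x [<-|/H1 [h1 h2]].
      split; [by left | by []].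
    split; [by right | by []].
  + rewrite /=; constructor=> // /List.in_map_iff [b [E Hb]]; apply: Hn; by exists b.
  + move=> x [<-|hx] Px; first by exists a; split=> //=; left.
    by case: (H3 x hx Px) => b [hb E]; exists b; split=> //=; right.
  + by rewrite /= ltnS.
- exists l0; split; last split; last split.
  + by move=> x /H1 [h1 h2]; split=> //=; right.
  + exact: H2.
  + move=> x [<-|hx] Px; last exact: H3.
    apply: NNPP => Hn; apply: Hc; split=> //.
  + by rewrite /=; apply: leqW.
Qed.

Lemma NoDup_incl_len (X : Type) (l l' : list X) : List.NoDup l -> List.incl l l' -> List.length l <= List.length l'.
Proof. move=> h1 h2; apply/leP; exact: List.NoDup_incl_length. Qed.

Fixpoint depth S (f : formula S) : nat :=
  match f with
  | FRel _ _ => 0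
  | FEq _ _ => 0
  | FNot g => depth g
  | FAnd g h => maxn (depth g) (depth h)
  | FEx g => (depth g).+1
  end.

Section EF.
Variable S : signature.
Variables (lp : seq (psym S)) (lf : seq (fsym S)).
Hypothesis Hlp : forall p, List.In p lp.
Hypothesis Hlf : forall f, List.In f lf.
Hypothesis Hpar : forall p : psym S, parity p < 2.
Hypothesis Hfar : forall f : fsym S, farity f = 0.

Definition np := size lp.
Definition nf := size lf.
Definition getp (i : 'I_np) : psym S := tnth (in_tuple lp) i.
Definition getf (j : 'I_nf) : fsym S := tnth (in_tuple lf) j.

Definition Types := {ffun 'I_np -> bool}.

Definition ty (M : structure S) (x : dom M) : Types :=
  [ffun i => pb (@pint S M (getp i) (fun _ => x))].

Definition cval (M : structure S) (j : 'I_nf) : dom M :=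
  @fint S M (getf j) (fun _ => dom_inhab M).

Definition hasN (M : structure S) (tau : Types) (t : nat) : Prop :=
  exists l : list (dom M), List.NoDup l /\ List.length l = t /\
    forall x, List.In x l -> ty x = tau.

Lemma ty_pint (M M' : structure S) (x : dom M) (y : dom M') p :
  ty x = ty y -> (@pint S M p (fun _ => x) <-> @pint S M' p (fun _ => y)).
Proof.
have [i <-] := in_tnth (Hlp p).
move=> E; have := congr1 (fun f : Types => f i) E; rewrite /= !ffunE => E2; exact: (pb_eq E2).
Qed.

Lemma fun0 (X : Type) n (g h : 'I_n -> X) : n = 0 -> g = h.
Proof. by move=> E; apply: functional_extensionality => -[i hi]; exfalso; move: hi; rewrite E. Qed.

Lemma fun1 (X : Type) n (h0 : 0 < n) (g : 'I_n -> X) : n < 2 -> g = fun _ => g (Ordinal h0).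
Proof.
move=> hn; apply: functional_extensionality => i; congr g; apply: val_inj => /=.
have := ltn_ord i; lia.
Qed.

Definition pos := (nat + 'I_nf)%type.
Definition pv (M : structure S) (e : nat -> dom M) (a : pos) : dom M :=
  match a with inl i => e i | inr j => cval M j end.
Definition valid (n : nat) (a : pos) : bool :=
  match a with inl i => i < n | inr _ => true end.

Definition Agr n (M M' : structure S) (e : nat -> dom M) (e' : nat -> dom M') : Prop :=
  (forall a b, valid n a -> valid n b -> (pv e a = pv e b <-> pv e' a = pv e' b)) /\
  (forall a, valid n a -> ty (pv e a) = ty (pv e' a)).

Definition Same Q (M M' : structure S) : Prop :=
  ty (dom_inhab M) = ty (dom_inhab M') /\
  forall tau t, t <= Q -> (hasN M tau t <-> hasN M' tau t).

Definition posl n : list pos := List.map inl (seq.iota 0 n) ++ List.map inr (enum 'I_nf).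

Lemma posl_valid n a : List.In a (posl n) <-> valid n a.
Proof.
rewrite /posl List.in_app_iff !List.in_map_iff; case: a => [i|j] /=; split.
- by move=> [[x [[<-]]]|[x []]] //; rewrite inE_list mem_iota.
- by move=> h; left; exists i; split=> //; rewrite inE_list mem_iota.
- by [].
- by move=> _; right; exists j; split=> //; rewrite inE_list mem_enum.
Qed.

Lemma posl_len n : List.length (posl n) = n + nf.
Proof. by rewrite lenE /posl size_cat !size_map size_iota -enumT -cardE card_ord. Qed.

Lemma pv_scons n b : valid n.+1 b -> b = inl 0 \/ exists c, valid n c /\
  forall (M : structure S) (m : dom M) e, pv (scons m e) b = pv e c.
Proof.
case: b => [[|i]|j] /= h; first by left.
  by right; exists (inl i).
by right; exists (inr j).
Qed.

Lemma extend Q n (M M' : structure S) e e' :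
  Same Q M M' -> Agr n e e' -> n + nf < Q ->
  forall m : dom M, exists m' : dom M', Agr n.+1 (scons m e) (scons m' e').
Proof.
move=> [_ HS] [A1 A2] hQ m.
case: (classic (exists a, valid n a /\ pv e a = m)) => [[a [va Ea]]|Hno].
  exists (pv e' a); split.
    move=> b c vb vc.
    case: (pv_scons vb) => [->|[b' [vb' Eb]]];
    case: (pv_scons vc) => [->|[c' [vc' Ec]]]; rewrite ?Eb ?Ec /=; try by [].
    - by rewrite -Ea A1.
    - by rewrite -Ea; split=> h; apply/esym/A1 => //; apply/esym.
    - exact: A1.
  move=> b vb; case: (pv_scons vb) => [->|[b' [vb' Eb]]]; rewrite ?Eb /=.
    by rewrite -Ea A2.
  exact: A2.
set tau := ty m.
have [m' [Hm' Hn']] : exists m' : dom M', ty m' = tau /\ forall a, valid n a -> pv e' a <> m'.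
  apply: NNPP => Hc.
  have Hc' : forall m', ty m' = tau -> exists a, valid n a /\ pv e' a = m'.
    move=> m' hm'; apply: NNPP => H2; apply: Hc; exists m'; split=> // a va E.
    by apply: H2; exists a.
  case: (rep_list (pv e) (fun a => ty (pv e a) = tau) (posl n)) => A0 [H1 [H2 [H3 H4]]].
  have Hlen : List.length A0 <= n + nf by rewrite -posl_len.
  have [l' [Nl' [Ll' Tl']]] : hasN M' tau (List.length A0).+1.
    apply/HS; first lia.
    exists (m :: List.map (pv e) A0); split; last split.
    + constructor=> // /List.in_map_iff [a [Ea /H1 [/posl_valid va _]]].
      by apply: Hno; exists a.
    + by rewrite /= List.length_map.
    + move=> x [<-//|/List.in_map_iff [a [<- /H1 [_ ->]]]] //.
  have : List.length l' <= List.length (List.map (pv e') A0).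
    apply: NoDup_incl_len => // x hx; have tx := Tl' x hx.
    case: (Hc' x tx) => a [va Ea].
    have ta : ty (pv e a) = tau by rewrite A2 // Ea.
    case: (H3 a (proj2 (posl_valid n a) va) ta) => b [Hb Eb].
    have vb : valid n b by apply/posl_valid; case: (H1 b Hb).
    apply/List.in_map_iff; exists b; split=> //; rewrite -Ea; apply/esym; apply/(A1 a b va vb).
    by [].
  by rewrite List.length_map Ll'; lia.
exists m'; split.
  move=> b c vb vc.
  case: (pv_scons vb) => [->|[b' [vb' Eb]]];
  case: (pv_scons vc) => [->|[c' [vc' Ec]]]; rewrite ?Eb ?Ec /=; try by [].
  - split=> h; exfalso; [apply: Hno; by exists c' | exact: Hn' (esym h)].
  - split=> h; exfalso; [apply: Hno; exists b'; by split | exact: Hn' h].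
  - exact: A1.
move=> b vb; case: (pv_scons vb) => [->|[b' [vb' Eb]]]; rewrite ?Eb /=.
  by rewrite Hm'.
exact: A2.
Qed.

Lemma Same_sym Q M M' : Same Q M M' -> Same Q M' M.
Proof. move=> [h1 h2]; split; first by rewrite h1. move=> tau t ht; apply: iff_sym; exact: h2. Qed.

Lemma Agr_sym n (M M' : structure S) (e : nat -> dom M) (e' : nat -> dom M') :
  Agr n e e' -> Agr n e' e.
Proof. move=> [h1 h2]; split=> [a b va vb|a va]; [apply: iff_sym; exact: h1 | apply: esym; exact: h2]. Qed.

Lemma EF Q (M M' : structure S) : Same Q M M' ->
  forall phi n (e : nat -> dom M) (e' : nat -> dom M'),
  closed_below n phi -> Agr n e e' -> n + nf + depth phi <= Q ->
  (sat e phi <-> sat e' phi).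
Proof.
move=> HS phi; elim: phi => [r args|i j|g IH|g IHg h IHh|g IH] n e e' /= Hc HA HQ.
- case: r args Hc => [p|f] args /= Hc.
  + case: (posnP (parity p)) => hp.
      rewrite (fun0 (fun i => e (args i)) (fun _ => dom_inhab M) hp).
      rewrite (fun0 (fun i => e' (args i)) (fun _ => dom_inhab M') hp).
      apply: ty_pint; exact: HS.1.
    rewrite (fun1 hp (fun i => e (args i)) (Hpar p)).
    rewrite (fun1 hp (fun i => e' (args i)) (Hpar p)).
    apply: ty_pint; apply: (HA.2 (inl _)) => /=.
    by move/forallP: Hc => /(_ (Ordinal hp)).
  + have [j Ej] := in_tnth (Hlf f); subst f.
    set F := fint _; set F' := fint _.
    have -> : F = cval M j by rewrite /F /cval; congr fint; apply: fun0; exact: Hfar.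
    have -> : F' = cval M' j by rewrite /F' /cval; congr fint; apply: fun0; exact: Hfar.
    apply: (HA.1 (inr j) (inl (args ord_max))) => //=.
    by move/forallP: Hc => /(_ ord_max).
- by move/andP: Hc => [hi hj]; apply: (HA.1 (inl i) (inl j)).
- by split=> H1 H2; apply: H1; apply/(IH n e e') => //.
- move/andP: Hc => [c1 c2].
  rewrite (IHg n e e') ?(IHh n e e') //; lia.
- split=> -[m Hm].
    have [m' HA'] := extend HS HA (ltac:(lia)) m.
    by exists m'; apply/(IH n.+1 _ _ Hc HA') => //; lia.
  have [m' HA'] := extend (Same_sym HS) (Agr_sym HA) (ltac:(lia)) m.
  by exists m'; apply/(IH n.+1 _ _ Hc (Agr_sym HA')) => //; lia.
Qed.
End EF.

Notation Data lp lf Q := (Types lp * {ffun 'I_(nf lf) -> Types lp} * {ffun ('I_(nf lf) * 'I_(nf lf)) -> bool}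
  * {ffun (Types lp * 'I_Q.+1) -> bool})%type.

Section Blow.
Variable S : signature.
Variables (lp : seq (psym S)) (lf : seq (fsym S)).
Hypothesis Hlp : forall p, List.In p lp.
Hypothesis Hlf : forall f, List.In f lf.
Hypothesis Hpar : forall p : psym S, parity p < 2.
Hypothesis Hfar : forall f : fsym S, farity f = 0.

Local Notation Types := (Types lp).
Local Notation ty := (ty lp).
Local Notation hasN := (@hasN S lp).
Local Notation cval := (@cval S lf).
Local Notation nf := (nf lf).

Definition data Q (M : structure S) : Data lp lf Q :=
  (ty (dom_inhab M), [ffun j => ty (cval M j)],
   [ffun jk : 'I_nf * 'I_nf => pb (cval M jk.1 = cval M jk.2)],
   [ffun tt : Types * 'I_Q.+1 => pb (hasN M tt.1 tt.2)]).

Lemma hasN_pred (M : structure S) tau t : hasN M tau t.+1 -> hasN M tau t.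
Proof.
move=> [[|a l] [N [L T]]] //; exists l; split; last split.
- by inversion N.
- by case: L.
- by move=> x hx; apply: T; right.
Qed.

Lemma hasN_mono (M : structure S) tau t t' : t' <= t -> hasN M tau t -> hasN M tau t'.
Proof.
elim: t => [|t IH] h H; first by move: h; rewrite leqn0 => /eqP->.
case: (ltngtP t' t.+1) h => // [h|->] _; last by [].
by apply: IH; [rewrite -ltnS | apply: hasN_pred].
Qed.

Lemma data_sat Q (M M' : structure S) (phi : sentence S) :
  data Q M = data Q M' -> nf + depth (proj1_sig phi) <= Q -> (satS M phi <-> satS M' phi).
Proof.
case=> h1 h2 h3 h4 hQ.
have HS : Same lp Q M M'.
  split=> // tau t ht.
  have := congr1 (fun f : {ffun (Types * 'I_Q.+1) -> bool} => f (tau, Ordinal (ht : t < Q.+1))) h4.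
  by rewrite !ffunE /= => E0; exact: (pb_eq E0).
rewrite /satS; apply: (EF Hlp Hlf Hpar Hfar HS (n := 0)) => //.
- exact: proj2_sig phi.
- split.
    move=> [i|j] [i'|k] //= _ _.
    have := congr1 (fun f : {ffun ('I_nf * 'I_nf) -> bool} => f (j, k)) h3.
    by rewrite !ffunE /= => E0; exact: (pb_eq E0).
  move=> [i|j] //= _.
  by have := congr1 (fun f : {ffun 'I_nf -> Types} => f j) h2; rewrite !ffunE.
Qed.

Lemma NoDup_map_on (X Y : Type) (f : X -> Y) (l : list X) :
  (forall x y, List.In x l -> List.In y l -> f x = f y -> x = y) -> List.NoDup l -> List.NoDup (List.map f l).
Proof. by move=> H; apply: List.NoDup_map_NoDup_ForallPairs => x y hx hy; apply: H. Qed.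

Variable Q : nat.
Hypothesis hQ : 0 < Q.
Variable M : structure S.

Definition big (tau : Types) : bool := pb (hasN M tau Q).
Definition bdom := {p : dom M * nat | (p.2 == 0) || big (ty p.1)}.
Definition binh : bdom := exist _ (dom_inhab M, 0) isT.
Definition bpint (p : psym S) (args : 'I_(parity p) -> bdom) : Prop :=
  pint (fun i => (sval (args i)).1).
Definition bfint (f : fsym S) (args : 'I_(farity f) -> bdom) : bdom :=
  exist _ (fint (fun i => (sval (args i)).1), 0) isT.
Definition BM : structure S := @Structure S bdom binh bpint bfint.

Lemma sig_inj (x y : bdom) : sval x = sval y -> x = y.
Proof. by case: x y => [a ha] [b hb] /= E; subst; congr exist; apply: bool_irrelevance. Qed.

Lemma ty_B (x : dom BM) : ty x = ty (sval x).1.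
Proof. by []. Qed.

Lemma cval_B j : sval (cval BM j) = (cval M j, 0).
Proof. by []. Qed.

Definition mkb (x : dom M) (hx : big (ty x)) (i : nat) : bdom :=
  exist _ (x, i) (introT orP (or_intror hx)).

Lemma hasN_big tau t : big tau -> hasN BM tau t.
Proof.
move=> Hb; have Hn := proj1 (pbP _) Hb.
have [x Tx] : exists x : dom M, ty x = tau.
  case: Hn => -[|x l] [_ [L T]]; first by move: hQ; rewrite -L.
  by exists x; apply: T; left.
have hx : big (ty x) by rewrite Tx.
exists (List.map (mkb hx) (List.seq 0 t)); split; last split.
- apply: NoDup_map_on; last exact: List.seq_NoDup.
  by move=> a b _ _ [].
- by rewrite List.length_map List.length_seq.
- by move=> y /List.in_map_iff [i [<- _]]; rewrite ty_B.
Qed.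

Lemma hasN_small tau t : ~~ big tau -> (hasN BM tau t <-> hasN M tau t).
Proof.
move=> Hb; split.
  move=> [l [N [L T]]]; exists (List.map (fun y : bdom => (sval y).1) l); split; last split.
  - have z : forall y, List.In y l -> (sval y).2 = 0.
      move=> [[y1 y2] hy] Hy /=; have := hy; case/orP => [/eqP//|hb'].
      by have := T _ Hy; rewrite ty_B /= => Ty; move: hb'; rewrite Ty (negbTE Hb).
    apply: NoDup_map_on => // a b ha hb E; apply: sig_inj.
    have za := z a ha; have zb := z b hb.
    by move: E za zb; case: (sval a) => ? ?; case: (sval b) => ? ? /= -> -> ->.
  - by rewrite List.length_map.
  - by move=> y /List.in_map_iff [z [<- hz]]; rewrite -ty_B; apply: T.
move=> [l [N [L T]]]; exists (List.map (fun x : dom M => (exist _ (x, 0) isT : bdom)) l).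
split; last split.
- by apply: NoDup_map_on => // a b _ _ [].
- by rewrite List.length_map.
- by move=> y /List.in_map_iff [z [<- hz]]; rewrite ty_B /=; apply: T.
Qed.

Lemma blow_data Q' (M' : structure S) : Q <= Q' -> data Q M = data Q M' ->
  (forall tau, hasN M' tau Q -> hasN M' tau Q') -> data Q' BM = data Q' M'.
Proof.
move=> hQQ [h1 h2 h3 h4] Hmon.
have c4 : forall tau t, t <= Q -> (hasN M tau t <-> hasN M' tau t).
  move=> tau t ht.
  have := congr1 (fun f : {ffun (Types * 'I_Q.+1) -> bool} => f (tau, Ordinal (ht : t < Q.+1))) h4.
  by rewrite !ffunE /= => E0; exact: (pb_eq E0).
rewrite /data; congr (_, _, _, _).
- by rewrite -h1.
- by rewrite -h2; apply/ffunP => j; rewrite !ffunE.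
- rewrite -h3; apply/ffunP => jk; rewrite !ffunE /=; apply: pb_ext; split.
    by move=> E; have := congr1 (fun x : bdom => (sval x).1) E.
  by move=> E; apply: sig_inj; rewrite !cval_B E.
- apply/ffunP => -[tau t]; rewrite !ffunE /=; apply: pb_ext.
  case: (boolP (big tau)) => Hb.
    split=> _; first by apply: (hasN_mono (t := Q')); [rewrite -ltnS ltn_ord | apply: Hmon; apply/c4 => //; apply/pbP].
    exact: hasN_big.
  rewrite hasN_small //.
  case: (leqP t Q) => ht; first exact: c4.
  split=> H; exfalso; move/negP: Hb; apply; apply/pbP.
    exact: (hasN_mono (ltnW ht)).
  by apply/c4 => //; apply: (hasN_mono (ltnW ht)).
Qed.

End Blow.

Lemma RSge_inv S (F : family S) d : RSge Peano.lt F d.+1 ->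
  (d = 0 /\ family_infinite F) \/
  (0 < d /\ exists phi : nat -> sentence S,
      (forall i j, i <> j -> inconsistent2 (phi i) (phi j)) /\
      (forall k, RSge Peano.lt (restrict F (phi k)) d)).
Proof.
move=> H; inversion H as [F0 w Hm Hne E1 E2|F0 w v Hm Hs Hinf E1 E2|F0 w v Hm Hs Hex E1 E2|F0 w Hl Hall E1 E2]; subst.
- by exfalso; apply: (Hm 0); apply/ltP.
- left; split=> //.
  have v0 : v = 0 by case: v Hm Hs => // v Hm; exfalso; apply: (Hm 0); apply/ltP.
  subst v; case: d H Hs => // d _ [_ Hu]; exfalso; apply: (Hu 1); apply/ltP => //.
- right.
  case: Hs => /ltP hv Hu.
  have vd : v = d.
    case: (ltngtP v d) => // [hlt|hgt]; last lia.
    by exfalso; apply: (Hu d); apply/ltP.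
  subst v; split=> //.
  case: d Hm {H Hu hv Hex} => // Hm; exfalso; apply: Hm => v /ltP //.
- exfalso; match goal with h : is_limit _ _ |- _ => case: h => _; apply end.
  exists d; split; first by apply/ltP.
  by move=> u /ltP h1 /ltP h2; lia.
Qed.

Section Rank.
Variable S : signature.
Variables (lp : seq (psym S)) (lf : seq (fsym S)).
Hypothesis Hlp : forall p, List.In p lp.
Hypothesis Hlf : forall f, List.In f lf.
Hypothesis Hpar : forall p : psym S, parity p < 2.
Hypothesis Hfar : forall f : fsym S, farity f = 0.

Local Notation Types := (Types lp).
Local Notation ty := (ty lp).
Local Notation hasN := (@hasN S lp).
Local Notation nf := (nf lf).

Definition dimQ Q (M : structure S) := #|[set tau : Types | pb (hasN M tau Q)]|.

Lemma cover Q (M : structure S) tau : ~ hasN M tau Q -> exists L, forall x : dom M, ty x = tau -> List.In x L.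
Proof.
move=> Hn.
suff: forall k (l : list (dom M)), List.NoDup l -> (forall x, List.In x l -> ty x = tau) ->
  Q - List.length l <= k -> exists L, forall x : dom M, ty x = tau -> List.In x L.
  by move=> H; apply: (H Q nil) => //; [exact: List.NoDup_nil | rewrite subn0].
elim=> [|k IH] l Nl Tl hk.
  exfalso; apply: Hn; apply: (hasN_mono (t := List.length l)); first lia.
  by exists l.
case: (classic (exists x, ty x = tau /\ ~ List.In x l)) => [[x [Tx Hx]]|Hno].
  apply: (IH (x :: l)).
  - by constructor.
  - by move=> y [<-|/Tl].
  - case: (leqP Q (List.length l)) => hl.
      exfalso; apply: Hn; apply: (hasN_mono (t := List.length l)) => //.
      by exists l.
    rewrite /=; lia.
exists l => x Tx; apply: NNPP => H; apply: Hno; by exists x.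
Qed.

Lemma finite_of_small Q (M : structure S) : (forall tau, ~ hasN M tau Q) -> finite_type (dom M).
Proof.
move=> H.
suff: forall ts : seq Types, exists L, forall x : dom M, ty x \in ts -> List.In x L.
  by move=> /(_ (enum Types)) [L HL]; exists L => x; apply: HL; rewrite mem_enum.
elim=> [|tau ts [L2 H2]]; first by exists nil.
have [L1 H1] := cover (H tau).
exists (L1 ++ L2) => x; rewrite in_cons => /orP[/eqP E|hx]; apply/List.in_app_iff.
  by left; apply: H1.
by right; apply: H2.
Qed.


Definition Qk Q (phi : sentence S) := maxn Q (nf + depth (proj1_sig phi)).

Lemma claim d : forall Q (F : family S), 0 < Q -> (forall T, F T -> T_inf S T) ->
  (forall T M, F T -> models M T -> dimQ Q M <= d) -> ~ RSge Peano.lt F d.+1.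
Proof.
elim: d => [|d IH] Q F hQ HF Hd /RSge_inv.
  case=> [[_ Hinf]|[//]]; apply: Hinf; exists nil => T FT; exfalso.
  have [_ [M [Minf Mm]]] := HF T FT.
  apply: Minf; apply: (finite_of_small (Q := Q)) => tau Htau.
  have := Hd T M FT Mm; rewrite leqn0 => /eqP/cards0_eq/setP/(_ tau).
  by rewrite !inE; move/negbT/negP; apply; apply/pbP.
case=> [[//]|[_ [phi [Hinc Hk]]]].
pose R k (a : Data lp lf Q) := exists T (M : structure S), F T /\ T (phi k) /\ models M T /\
  (forall tau, hasN M tau Q -> hasN M tau (Qk Q (phi k))) /\ @data S lp lf Q M = a.
apply: (@pigeon _ (enum (@predT (Data lp lf Q))) R).
  move=> k.
  have : ~ (forall T M, restrict F (phi k) T -> models M T -> dimQ (Qk Q (phi k)) M <= d).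
    move=> H; apply: (IH (Qk Q (phi k)) (restrict F (phi k))) => //.
    - by apply: leq_trans hQ (leq_maxl _ _).
    - by move=> T [FT _]; apply: HF.
  move=> Hn.
  have [T [M [[FT Tk] [Mm HdM]]]] : exists T M, restrict F (phi k) T /\ models M T /\
      d < dimQ (Qk Q (phi k)) M.
    apply: NNPP => H; apply: Hn => T M HT Mm; rewrite leqNgt; apply/negP => h.
    by apply: H; exists T, M.
  exists (@data S lp lf Q M); split; first by apply/inE_list; rewrite mem_enum.
  exists T, M; split; first by [].
  split; first by [].
  split; first by [].
  split; last by [].
  have sub : [set tau | pb (hasN M tau (Qk Q (phi k)))] \subset [set tau | pb (hasN M tau Q)].
    apply/subsetP => tau; rewrite !inE => /pbP h; apply/pbP.
    exact: (hasN_mono (leq_maxl _ _) h).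
  have := Hd T M FT Mm; rewrite /dimQ => h1.
  have Eq : [set tau | pb (hasN M tau (Qk Q (phi k)))] = [set tau | pb (hasN M tau Q)].
    apply/eqP; rewrite eqEcard sub /=; apply: leq_trans h1 _; exact: HdM.
  move=> tau h; have : tau \in [set tau | pb (hasN M tau Q)] by rewrite inE; apply/pbP.
  by rewrite -Eq inE => /pbP.
move=> k j a [T1 [M1 [F1 [T1k [M1m [Mon1 D1]]]]]] [T2 [M2 [F2 [T2j [M2m [Mon2 D2]]]]]].
apply: NNPP => hkj.
set N := BM lp Q M1.
have E1 : @data S lp lf (Qk Q (phi k)) N = @data S lp lf (Qk Q (phi k)) M1.
  apply: (blow_data hQ) => //; exact: leq_maxl.
have E2 : @data S lp lf (Qk Q (phi j)) N = @data S lp lf (Qk Q (phi j)) M2.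
  apply: (blow_data hQ) => //; [exact: leq_maxl | by rewrite D1 D2].
apply: (Hinc k j hkj N); split.
  apply/(data_sat Hlp Hlf Hpar Hfar E1); first exact: leq_maxr.
  exact: M1m.
apply/(data_sat Hlp Hlf Hpar Hfar E2); first exact: leq_maxr.
exact: M2m.
Qed.

Lemma part1_bound : ~ RSge Peano.lt (T_inf S) #|{: Types}|.+1.
Proof.
apply: (@claim _ 1 (T_inf S)) => // T M _ _; exact: max_card.
Qed.

End Rank.


Lemma RS_min S (F : family S) : RSge Peano.lt F 0 ->
  forall N, ~ RSge Peano.lt F N -> exists n, RS_eq_nat F n.
Proof.
move=> H0; elim=> [//|N IH] HN.
case: (classic (RSge Peano.lt F N)) => h; last exact: IH.
by exists N; split.
Qed.

Definition M0 (S : signature) : structure S :=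
  @Structure S nat 0 (fun _ _ => False) (fun _ _ => 0).

Theorem theorem3p2 (S : signature) :
  (small_signature S -> exists n : nat, RS_eq_nat (T_inf S) n) /\
  (~ small_signature S -> RS_infty (T_inf S)).
Proof.
split; last exact: part2.
move=> [[[lp Hlp] [lf Hlf]] [Hpar Hfar]].
apply: (RS_min _ (part1_bound Hlp Hlf Hpar Hfar)).
apply: RSge_zero; first by move=> v /ltP.
exists (Th (M0 S)); apply: Th_Tinf; exact: nat_inf.
Qed.
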